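(* Let $Y(0),Y(1)$ be integrable real-valued random variables, $\tau=Y(1)-Y(0)$, and $X$ a random vector with support $\mathcal{X}$. Each of the following two conditions implies that for all $x_1,x_2\in\mathcal{X}$, $$E[Y(0)|X=x_1]\geq E[Y(0)|X=x_2]\iff E[Y(1)|X=x_1]\geq E[Y(1)|X=x_2].$$ (a) For all $x_1,x_2\in\mathcal{X}$: $E[Y(0)|X=x_1]\geq E[Y(0)|X=x_2]\implies E[\tau|X=x_1]\geq E[\tau|X=x_2]$. (b) For all $x_1,x_2\in\mathcal{X}$: $|E[\tau|X=x_1]-E[\tau|X=x_2]|\leq|E[Y(0)|X=x_2]-E[Y(0)|X=x_1]|$, with strict inequality whenever the right-hand side is nonzero.
   Context: Conditional expectations $x\mapsto E[\cdot|X=x]$ are fixed functions on $\mathcal{X}$ (e.g. continuous versions), with $E[\tau|X=x]=E[Y(1)|X=x]-E[Y(0)|X=x]$. *)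

(* Defs.v *)
From HB Require Import structures.
From mathcomp Require Import all_boot all_order all_algebra.
From mathcomp Require Import all_classical all_reals.
Set Implicit Arguments. Unset Strict Implicit. Unset Printing Implicit Defensive.
Import Order.TTheory GRing.Theory Num.Theory.

(* Per the paper's standing convention, the conditional expectations
   x |-> E[Y(0)|X=x], E[Y(1)|X=x], E[tau|X=x] are fixed functions on the
   support [Xsupp] of X, with E[tau|X=x] = E[Y(1)|X=x] - E[Y(0)|X=x]. *)

(* Main.v *)
Require Import Defs.
From mathcomp Require Import lra.
From HB Require Import structures.
From mathcomp Require Import all_boot all_order all_algebra.
From mathcomp Require Import all_classical all_reals.
Import Order.TTheory GRing.Theory Num.Theory.
Local Open Scope ring_scope.
Local Open Scope classical_set_scope.

Theorem proposition1 (R : realType) (T : Type) (Xsupp : set T)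
  (m0 m1 mtau : T -> R)
  (hmtau : forall x, Xsupp x -> mtau x = m1 x - m0 x) :
  let conclusion := forall x1 x2, Xsupp x1 -> Xsupp x2 ->
      (m0 x1 >= m0 x2 <-> m1 x1 >= m1 x2) in
  ((forall x1 x2, Xsupp x1 -> Xsupp x2 ->
      m0 x1 >= m0 x2 -> mtau x1 >= mtau x2) -> conclusion) /\
  ((forall x1 x2, Xsupp x1 -> Xsupp x2 ->
      `|mtau x1 - mtau x2| <= `|m0 x2 - m0 x1| /\
      (`|m0 x2 - m0 x1| != 0 -> `|mtau x1 - mtau x2| < `|m0 x2 - m0 x1|))
    -> conclusion).
Proof.
move=> c; split => H x1 x2 s1 s2.
- have e1 := hmtau _ s1; have e2 := hmtau _ s2.
  have h12 := H x1 x2 s1 s2; have h21 := H x2 x1 s2 s1.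
  split => h.
  + have := h12 h; lra.
  + case: (lerP (m0 x2) (m0 x1)) => // hl.
    have := h21 (ltW hl); lra.
- have e1 := hmtau _ s1; have e2 := hmtau _ s2.
  case: (H x1 x2 s1 s2) => ha hb.
  move: ha hb.
  case: (lerP 0 (mtau x1 - mtau x2)) => pa;
    [rewrite (ger0_norm pa) | rewrite (ltr0_norm pa)];
  (case: (ltrgt0P (m0 x2 - m0 x1)) => pb);
  move=> h1 h2; try (have := h2 isT; clear h2 => h2);
  try (rewrite eqxx in h2);
  split => ?; try lra.
Qed.
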